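(* $R_2(VC)=9$ and $R_3(VC)>521$: every 2-coloring of $[9]$ contains two integers of the same color differing by a positive perfect cube, there is a 2-coloring of $[8]$ with no such pair, and there is a 3-coloring of $[521]$ in which no two integers of the same color differ by a positive perfect cube.
   Context: For $n\in\mathbb{N}$, $[n]=\{1,\dots,n\}$; a $c$-coloring of $[n]$ is a function $[n]\to[c]$. $R_c(VC)$ (the van der Cube number) is the least positive integer $n$ such that every $c$-coloring of $[n]$ contains integers $a<b$ in $[n]$ of the same color with $b-a=y^3$ for some positive integer $y$. *)

(* Defs.v *)
From mathcomp Require Import all_boot.
Set Implicit Arguments. Unset Strict Implicit. Unset Printing Implicit Defensive.

(* A c-coloring of [n] = {1..n}: a function col : nat -> 'I_c; only its values
   on 1..n matter. *)
Definition mono_cube_pair (c : nat) (n : nat) (col : nat -> 'I_c) : Prop :=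
  exists a b y : nat,
    [/\ 1 <= a < b, b <= n, 0 < y, b - a = y ^ 3 & col a = col b].

Definition vc_forced (c n : nat) : Prop :=
  forall col : nat -> 'I_c, mono_cube_pair n col.

Definition is_RVC (c r : nat) : Prop :=
  0 < r /\ vc_forced c r /\ (forall m, 0 < m -> m < r -> ~ vc_forced c m).

Definition RVC_gt (c k : nat) : Prop :=
  forall n, 0 < n -> n <= k -> ~ vc_forced c n.

(* Main.v *)
Require Import Defs.
From mathcomp Require Import all_boot.
From mathcomp Require Import zify.
Set Implicit Arguments. Unset Strict Implicit. Unset Printing Implicit Defensive.

Definition sol : seq nat := [:: 0; 1; 0; 2; 1; 2; 1; 0; 1; 0; 2; 1; 0; 1; 0; 2; 0; 2; 1; 0; 2; 0; 2; 1; 2; 1; 0; 1; 0; 2; 1; 2; 1; 0; 1; 0; 2; 1; 2; 1; 0; 2; 0; 2; 1; 2; 1; 0; 1; 0; 2; 0; 2; 1; 0; 1; 0; 2; 1; 2; 1; 0; 1; 0; 2; 0; 2; 1; 0; 1; 0; 2; 0; 2; 1; 0; 2; 0; 2; 1; 2; 1; 0; 2; 1; 2; 1; 0; 1; 0; 1; 0; 2; 1; 2; 1; 0; 1; 0; 2; 1; 0; 1; 0; 2; 0; 2; 1; 0; 1; 0; 2; 0; 2; 1; 2; 1; 0; 2; 0; 2; 1; 2; 1; 0; 1; 0; 2; 1; 2; 1; 0; 2; 0; 2; 1; 2; 1; 0; 2; 0; 2; 1; 0; 1; 0; 2; 1; 2; 1; 0; 1; 0; 2; 0; 2; 1; 0;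 1; 0; 2; 0; 2; 1; 0; 2; 0; 2; 1; 2; 1; 0; 2; 0; 2; 1; 2; 1; 0; 1; 0; 2; 0; 2; 1; 0; 1; 0; 2; 0; 2; 1; 0; 1; 0; 2; 1; 2; 1; 0; 1; 0; 2; 1; 2; 1; 0; 2; 0; 2; 1; 0; 1; 0; 2; 0; 2; 0; 2; 1; 0; 1; 0; 2; 0; 2; 1; 0; 2; 0; 2; 1; 2; 1; 0; 2; 1; 2; 1; 0; 1; 0; 1; 0; 2; 1; 2; 1; 0; 2; 0; 2; 1; 2; 1; 0; 2; 0; 2; 1; 0; 1; 0; 2; 0; 2; 1; 2; 1; 0; 2; 0; 2; 1; 0; 1; 0; 2; 0; 2; 1; 2; 1; 0; 2; 0; 2; 1; 2; 1; 0; 2; 1; 2; 1; 0; 1; 0; 2; 1; 0; 1; 0; 2; 0; 2; 0; 2; 1; 0; 1; 0; 2; 0; 2; 1; 0; 1; 0; 2; 1; 2; 1; 0; 2; 0; 2; 1; 2; 1; 0; 1; 0; 2; 1; 2; 1; 0; 1; 0; 2; 0; 2; 1; 0; 1; 0; 2; 1; 2; 1; 0; 1; 0; 2; 1; 2; 1; 0; 2; 0; 2; 1; 0; 1; 0; 2; 0; 2; 1; 2; 1; 0; 2; 0; 2; 1; 2; 1; 0; 2; 0; 2; 1; 0; 1; 0; 2; 1; 2; 1; 0; 1; 0; 2; 0; 2; 1; 2; 1; 0; 2; 0; 2; 1; 2; 1; 0; 2; 0; 2; 1; 0; 1; 0; 2; 0; 2; 1; 0; 1; 0; 2; 1; 2;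 1; 0; 2; 0; 2; 1; 2; 1; 2; 1; 0; 2; 0; 2; 1; 2; 1; 0; 2; 1; 2; 1; 0; 1; 0; 2; 1; 0; 1; 0; 2; 0; 2; 0; 2; 1; 0; 1; 0; 2; 0; 2; 1; 2; 1; 0; 2; 1; 2; 1; 0; 1; 0; 2; 1; 2; 1; 0; 1; 0; 2; 1; 2; 1; 0; 2; 0; 2; 1; 2; 1; 0; 1; 0; 2; 1; 2; 1; 0; 1; 0; 2; 1; 0; 1; 0; 2; 0; 2; 1; 0; 2; 0; 2; 1; 2; 1].

Definition col3 (x : nat) : 'I_3 :=
  match nth 0 sol x with 0 => ord0 | 1 => @Ordinal 3 1 isT | _ => ord_max end.

Definition colchk c (n K : nat) (col : nat -> 'I_c) : bool :=
  all (fun a => all (fun y => (a + y ^ 3 <= n) ==> (col a != col (a + y ^ 3)))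
                    (iota 1 K)) (iota 1 n).

Lemma no_mono_of_check c n K (col : nat -> 'I_c) :
  n <= K.+1 ^ 3 -> colchk n K col -> ~ mono_cube_pair n col.
Proof.
move=> hn /allP hc [a [b [y [/andP[a1 ab] bn y0 e ce]]]].
have yK : y <= K.
  rewrite leqNgt; apply/negP => Ky.
  have : K.+1 ^ 3 <= y ^ 3 by rewrite leq_exp2r.
  rewrite -e => h.
  lia.
have ha : a \in iota 1 n by rewrite mem_iota a1 /= add1n ltnS (leq_trans (ltnW ab) bn).
have /allP := hc a ha.
have hy : y \in iota 1 K by rewrite mem_iota y0 /= add1n ltnS.
move=> /(_ y hy).
have eb : a + y ^ 3 = b by rewrite -e subnKC // ltnW.
by rewrite eb bn ce eqxx.
Qed.

Lemma mono_mon c m n (col : nat -> 'I_c) :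
  m <= n -> mono_cube_pair m col -> mono_cube_pair n col.
Proof.
move=> mn [a [b [y [h1 h2 h3 h4 h5]]]].
by exists a, b, y; split=> //; apply: leq_trans mn.
Qed.

Lemma no521 : ~ mono_cube_pair 521 col3.
Proof. apply: (@no_mono_of_check _ _ 8); first by []. by vm_compute. Qed.

Definition col2 (x : nat) : 'I_2 := if odd x then ord_max else ord0.

Lemma no8 n : n <= 8 -> ~ mono_cube_pair n col2.
Proof.
move=> hn /(mono_mon hn).
apply: (@no_mono_of_check _ _ 1); first by []. by vm_compute.
Qed.

Lemma three2 (x y z : 'I_2) : x = y \/ y = z \/ z = x.
Proof.
have := ltn_ord x; have := ltn_ord y; have := ltn_ord z.
case: (eqVneq (x : nat) (y : nat)) => h1; first by left; apply: val_inj.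
case: (eqVneq (y : nat) (z : nat)) => h2; first by right; left; apply: val_inj.
move: h1 h2 => /eqP h1 /eqP h2 ? ? ?; right; right; apply: val_inj; rewrite /=; lia.
Qed.

Lemma forced9 : vc_forced 2 9.
Proof.
move=> col.
have H i : col i = col i.+1 \/ col i.+1 = col i.+2 \/ col i.+2 = col i.
  exact: three2.
case: (H 1) => [e|[e|e1]]; first by exists 1, 2, 1.
  by exists 2, 3, 1.
case: (H 3) => [e|[e|e3]]; first by exists 3, 4, 1.
  by exists 4, 5, 1.
case: (H 5) => [e|[e|e5]]; first by exists 5, 6, 1.
  by exists 6, 7, 1.
case: (H 7) => [e|[e|e7]]; first by exists 7, 8, 1.
  by exists 8, 9, 1.
exists 1, 9, 2; split=> //.
by rewrite e7 e5 e3 e1.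
Qed.

Theorem mainTheorem7 :
  [/\ is_RVC 2 9,
      vc_forced 2 9,
      (exists col : nat -> 'I_2, ~ mono_cube_pair 8 col),
      RVC_gt 3 521
    & exists col : nat -> 'I_3, ~ mono_cube_pair 521 col].
Proof.
split.
- split=> //; split; first exact: forced9.
  move=> m _ hm hf; apply: (@no8 m); first by rewrite -ltnS.
  exact: hf.
- exact: forced9.
- by exists col2; apply: no8.
- move=> n _ hn hf; apply: no521; exact: mono_mon hn (hf col3).
- by exists col3; apply: no521.
Qed.
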